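(* Let $(\mathcal{S},d_{\mathcal{S}})$, $(\mathcal{A},d_{\mathcal{A}})$ be metric spaces, $\gamma\in[0,1)$, $\rho$ an initial state distribution, $r$ a reward function, and $\pi,\pi'$ policies and $p,p'$ configurations. Then $$\Big|\mathbb{A}_{\pi,p}^{\pi',p'}-\big(\mathbb{A}_{\pi,p}^{\pi,p'}+\mathbb{A}_{\pi,p}^{\pi',p}\big)\Big|\le\int_{\mathcal{S}}\mu_{\pi,p}(ds)\,\mathcal{W}\big(\pi'(\cdot|s),\pi(\cdot|s)\big)\,\big\|A_{\pi,p}^{\pi,p'}\big\|_L.$$
   Context: $r:\mathcal{S}\times\mathcal{A}\times\mathcal{S}\to\mathbb{R}$. A configuration is a Markov kernel $p(\cdot|s,a)$ on $\mathcal{S}$; a policy is a Markov kernel $\pi(\cdot|s)$ on $\mathcal{A}$; $p_\pi(ds'|s)=\int\pi(da|s)p(ds'|s,a)$. Value functions (assumed well defined): $V_{\pi,p}(s)=\int\pi(da|s)\int p(ds'|s,a)(r(s,a,s')+\gamma V_{\pi,p}(s'))$, $Q_{\pi,p}(s,a)=\int p(ds'|s,a)(r(s,a,s')+\gamma V_{\pi,p}(s'))$, $U_{\pi,p}(s,a,s')=r(s,a,s')+\gamma V_{\pi,p}(s')$. $\mu_{\pi,p}=(1-\gamma)\sum_{t\ge0}\gamma^t\rho p_\pi^t$. Relative advantages: $A_{\pi,p}^{\pi',p}(s)=\int\pi'(da|s)(Q_{\pi,p}(s,a)-V_{\pi,p}(s))$; $A_{\pi,p}^{\pi,p'}(s,a)=\int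 p'(ds'|s,a)(U_{\pi,p}(s,a,s')-Q_{\pi,p}(s,a))$, a function on $\mathcal{S}\times\mathcal{A}$; $A_{\pi,p}^{\pi',p'}(s)=\int\pi'(da|s)\int p'(ds'|s,a)(U_{\pi,p}(s,a,s')-V_{\pi,p}(s))$. Expected versions: $\mathbb{A}_{\pi,p}^{\pi',p}=\int\mu_{\pi,p}(ds)A_{\pi,p}^{\pi',p}(s)$, $\mathbb{A}_{\pi,p}^{\pi,p'}=\int\mu_{\pi,p}(ds)\int\pi(da|s)A_{\pi,p}^{\pi,p'}(s,a)$, $\mathbb{A}_{\pi,p}^{\pi',p'}=\int\mu_{\pi,p}(ds)A_{\pi,p}^{\pi',p'}(s)$. $\|\cdot\|_L$ is the Lipschitz semi-norm, with $\mathcal{S}\times\mathcal{A}$ carrying the metric $d_{\mathcal{S}}(s,\bar s)+d_{\mathcal{A}}(a,\bar a)$; $\mathcal{W}(\mu,\nu)=\sup_{\|f\|_L\le1}|\int f\,d(\mu-\nu)|$. *)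

(* Defs.v *)
From HB Require Import structures.
From mathcomp Require Import all_boot all_order all_algebra.
From mathcomp Require Import all_classical all_reals all_analysis.

Set Implicit Arguments.
Unset Strict Implicit.
Unset Printing Implicit Defensive.

Import Order.TTheory GRing.Theory Num.Theory.
Import numFieldNormedType.Exports.

Local Open Scope classical_set_scope.
Local Open Scope ring_scope.

Section defs.
Context {R : realType}.

Definition is_metric {T : Type} (dist : T -> T -> R) : Prop :=
  [/\ forall x y, dist x y = 0 <-> x = y,
      forall x y, dist x y = dist y x &
      forall x y z, dist x z <= dist x y + dist y z].

Definition metric_open {T : Type} (dist : T -> T -> R) : set (set T) :=
  [set B | forall x, B x -> exists e : R, 0 < e /\ forall y, dist x y < e -> B y].

Definition borel_for {d} {T : measurableType d} (dist : T -> T -> R) : Prop :=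
  (@measurable d T) = <<s metric_open dist >>.

Local Open Scope ereal_scope.

(** Lipschitz semi-norm ||g||_L of g : S x A -> \bar R, where S x A carries the
    metric dS(s,s0) + dA(a,a0). Defined as the infimum of the Lipschitz
    constants (+oo if none). *)
Definition lip_norm2 {S A : Type} (dS : S -> S -> R) (dA : A -> A -> R)
    (g : S -> A -> \bar R) : \bar R :=
  ereal_inf [set L%:E | L in [set L : R | (0 <= L)%R /\
    forall s a s0 a0, `|g s a - g s0 a0| <= L%:E * (dS s s0 + dA a a0)%:E]].

(** Wasserstein-1 distance (Kantorovich-Rubinstein form). *)
Definition wasserstein {d} {A : measurableType d} (dA : A -> A -> R)
    (m n : set A -> \bar R) : \bar R :=
  ereal_sup [set `| \int[m]_a (f a)%:E - \int[n]_a (f a)%:E |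
    | f in [set f : A -> R | measurable_fun [set: A] f /\
                             forall a b, (`|f a - f b| <= dA a b)%R]].

Context {d1 d2 : measure_display} {S : measurableType d1} {A : measurableType d2}.

Definition Ufun (gamma : R) (r : S -> A -> S -> R) (V : S -> R) s a s' : R :=
  (r s a s' + gamma * V s')%R.

Definition Qfun (p : (S * A)%type -> {measure set S -> \bar R})
    (U : S -> A -> S -> R) s a : \bar R :=
  \int[p (s, a)]_s' (U s a s')%:E.

Definition adv_pol (pi' : S -> {measure set A -> \bar R})
    (Q : S -> A -> \bar R) (V : S -> R) s : \bar R :=
  \int[pi' s]_a (Q s a - (V s)%:E).

Definition adv_conf (p' : (S * A)%type -> {measure set S -> \bar R})
    (U : S -> A -> S -> R) (Q : S -> A -> \bar R) s a : \bar R :=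
  \int[p' (s, a)]_s' ((U s a s')%:E - Q s a).

Definition adv_both (pi' : S -> {measure set A -> \bar R})
    (p' : (S * A)%type -> {measure set S -> \bar R})
    (U : S -> A -> S -> R) (V : S -> R) s : \bar R :=
  \int[pi' s]_a \int[p' (s, a)]_s' (U s a s' - V s)%:E.

Fixpoint state_dist (rho : set S -> \bar R) (pi : S -> {measure set A -> \bar R})
    (p : (S * A)%type -> {measure set S -> \bar R}) (t : nat) : set S -> \bar R :=
  match t with
  | O => rho
  | t'.+1 => fun B => \int[state_dist rho pi p t']_s \int[pi s]_a p (s, a) B
  end.

Definition occupancy (gamma : R) (rho : set S -> \bar R)
    (pi : S -> {measure set A -> \bar R})
    (p : (S * A)%type -> {measure set S -> \bar R}) : set S -> \bar R :=
  fun B => (1 - gamma)%:E * \sum_(t <oo) ((gamma ^+ t)%:E * state_dist rho pi p t B).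

End defs.

(* Main.v *)
Require Import Defs.
From HB Require Import structures.
From mathcomp Require Import all_boot all_order all_algebra.
From mathcomp Require Import all_classical all_reals all_analysis.
From mathcomp Require Import ring lra measurable_realfun zify.
Import Order.TTheory GRing.Theory Num.Theory.
Import numFieldNormedType.Exports.
Local Open Scope classical_set_scope.
Local Open Scope ring_scope.

Lemma min_lip (R : realType) (c x y : R) :
  `|Num.min c x - Num.min c y| <= `|x - y|.
Proof.
have h1 := ler_norm (x - y); have h2 := ler_norm (y - x).
rewrite distrC in h2.
case: (leP c x) => hx; case: (leP c y) => hy;
  rewrite ?(min_l (ltW _)) ?min_l ?min_r ?(min_r (ltW _)) ?subrr ?normr0 //;
  try (rewrite ler_norml; apply/andP; split; lra).
Qed.

Lemma nmin_eq (R : realType) (n : nat) (x : R) :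
  n.+1%:R * Num.min n.+1%:R^-1 x = Num.min 1 (n.+1%:R * x).
Proof.
have hn : 0 < n.+1%:R :> R by rewrite ltr0n.
have [h|h] := boolP (n.+1%:R^-1 <= x).
  have h2 : 1 <= n.+1%:R * x.
    by have := ler_wpM2l (ltW hn) h; rewrite divff ?lt0r_neq0.
  by rewrite !minEle h h2 divff ?gt_eqF.
have h2 : n.+1%:R * x < 1.
  by move: h; rewrite -ltNge -(ltr_pM2l hn) divff ?lt0r_neq0.
by rewrite !minEle (negbTE h) leNgt h2.
Qed.

Section lip.
Context (R : realType) (d : measure_display) (A : measurableType d)
  (dA : A -> A -> R) (hdA : is_metric dA) (hbA : borel_for dA).

Lemma dist_ge0 x y : 0 <= dA x y.
Proof.
case: hdA => h0 hs ht.
have := ht x y x; rewrite (proj2 (h0 x x) erefl) (hs y x) => H; lra.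
Qed.

Lemma dist_xx x : dA x x = 0.
Proof. by case: hdA => h0 _ _; apply/h0. Qed.

Lemma lip_measurable (f : A -> R) (c : R) : 0 <= c ->
  (forall a b, `|f a - f b| <= c * dA a b) -> measurable_fun setT f.
Proof.
move=> c0 hf.
have := (@measurability _ _ _ _ setT f (@measurable_realfun.RGenOInfty.G R)).
move=> H; apply: H.
  exact: (@measurable_realfun.RGenOInfty.measurableE R).
move=> _ [_ [x ->] <-].
rewrite hbA; apply: sub_sigma_algebra => a /= [_].
rewrite in_itv /= andbT => xfa.
exists ((f a - x) / (c + 1)); split.
  by apply: divr_gt0; lra.
move=> b hab; split => //=; rewrite in_itv /= andbT.
have := hf a b; rewrite ler_norml => /andP[_ H2].
have H3 : c * dA a b <= (c + 1) * dA a b.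
  by apply: ler_wpM2r; [exact: dist_ge0|lra].
have H4 : (c + 1) * dA a b < f a - x.
  by rewrite mulrC -ltr_pdivlMr; [exact: hab|lra].
lra.
Qed.


Lemma mono_open_cvg (m : {measure set A -> \bar R}) (O : set A) (D : A -> R)
 (mD : forall n, measurable_fun setT (fun a => Num.min (n.+1%:R^-1) (D a)))
 (D0 : forall a, 0 <= D a) (Dp : forall a, O a -> 0 < D a) (Dz : forall a, ~ O a -> D a = 0) (mO : measurable O) :
  (fun n => \int[m]_a ((n.+1%:R * Num.min (n.+1%:R^-1) (D a))%:E))%E @ \oo --> m O.
Proof.
have -> : m O = (\int[m]_a (\1_O a)%:E)%E by rewrite integral_indic// setIT.
set g := fun n a => ((n.+1%:R * Num.min (n.+1%:R^-1) (D a))%:E)%E.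
have Hl : (fun a => limn (g ^~ a)) = (fun a => (\1_O a)%:E)%E.
  apply/funext => a; rewrite /g.
  case: (pselect (O a)) => Oa.
    rewrite indicE mem_set//; apply: cvg_lim => //; apply: cvg_near_cst.
    have [N hN] : exists N : nat, (D a)^-1 < N%:R.
      exists (Num.bound (D a)^-1); apply: archi_boundP.
      by rewrite invr_ge0 D0.
    near=> n.
    have Nn : (N <= n)%N by near: n; exists N.
    rewrite nmin_eq min_l//.
    have Da := Dp a Oa.
    have hh : (D a)^-1 <= n.+1%:R.
      apply: ltW; apply: (lt_le_trans hN); rewrite ler_nat; lia.
    by have := ler_wpM2l (ltW Da) hh; rewrite divff ?lt0r_neq0// [X in _ <= X -> _]mulrC.
  rewrite indicE memNset// Dz// .
  under eq_fun do rewrite min_r ?mulr0 //.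
  by rewrite lim_cst.
rewrite -Hl; apply: cvg_monotone_convergence => //.
- move=> n; apply/measurable_EFinP.
  apply: measurable_funM => //.
- move=> n a _; rewrite /g lee_fin; apply: mulr_ge0 => //.
  by rewrite le_min invr_ge0 D0 ler0n.
- move=> a _ n k nk; rewrite /g lee_fin !nmin_eq.
  rewrite le_min ge_min lexx /= ge_min; apply/orP; right.
  by rewrite ler_wpM2r// ler_nat.
Unshelve. all: by end_near.
Qed.

Lemma metric_open_setI : setI_closed (metric_open dA).
Proof.
move=> X Y hX hY x [Xx Yx].
have [e1 [e10 h1]] := hX x Xx; have [e2 [e20 h2]] := hY x Yx.
exists (Num.min e1 e2); split; first by rewrite lt_min e10 e20.
move=> y; rewrite lt_min => /andP[y1 y2]; split; [exact: h1|exact: h2].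
Qed.

Lemma lip_open_eq (m1 m2 : {measure set A -> \bar R}) :
  m1 setT = 1%E -> m2 setT = 1%E ->
  (forall f : A -> R, measurable_fun setT f ->
     (forall a b, `|f a - f b| <= dA a b) -> (forall a, 0 <= f a <= 1) ->
     (\int[m1]_a (f a)%:E = \int[m2]_a (f a)%:E)%E) ->
  forall O, metric_open dA O -> m1 O = m2 O.
Proof.
move=> h1 h2 hf O hO.
have mO : measurable O by rewrite hbA; exact: sub_sigma_algebra.
case: (pselect (exists b, ~ O b)); last first.
  move=> nb; have -> : O = setT.
    by apply/seteqP; split=> // x _; apply: contra_notP nb => nx; exists x.
  by rewrite h1 h2.
move=> [b0 nb0].
pose E a := [set dA a b | b in ~` O].
pose D a := inf (E a).
have hlb a : has_lbound (E a).
  by exists 0 => _ [b _ <-]; exact: dist_ge0.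
have hne a : nonempty (E a) by exists (dA a b0), b0.
have D0 a : 0 <= D a.
  by apply: lb_le_inf => // _ [b _ <-]; exact: dist_ge0.
have Dle a b : ~ O b -> D a <= dA a b.
  by move=> nb; apply: ge_inf => //; exists b.
have Dlip1 a a' : D a <= dA a a' + D a'.
  rewrite -lerBlDl; apply: lb_le_inf => // _ [b nb <-].
  rewrite lerBlDl; apply: (le_trans (Dle a b nb)).
  by case: hdA => _ _ ->.
have Dlip a a' : `|D a - D a'| <= dA a a'.
  rewrite ler_norml; apply/andP; split.
    have := Dlip1 a' a; case: hdA => _ hs _; rewrite hs; lra.
  have := Dlip1 a a'; lra.
have Dp a : O a -> 0 < D a.
  move=> Oa; have [e [e0 he]] := hO a Oa.
  apply: (lt_le_trans e0); apply: lb_le_inf => // _ [b nb <-].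
  by rewrite leNgt; apply/negP => /he.
have Dz a : ~ O a -> D a = 0.
  move=> na; apply/eqP; rewrite eq_le D0 andbT.
  by have := Dle a a na; rewrite dist_xx.
pose f n a := Num.min (n.+1%:R^-1) (D a).
have flip n a b : `|f n a - f n b| <= dA a b.
  exact: (le_trans (min_lip _ _ _ _) (Dlip a b)).
have mf n : measurable_fun setT (f n).
  apply: (@lip_measurable _ 1) => // a b; rewrite mul1r; exact: flip.
have f01 n a : 0 <= f n a <= 1.
  apply/andP; split; first by rewrite le_min invr_ge0 ler0n D0.
  rewrite /f ge_min; apply/orP; left.
  by rewrite invf_le1 ?ler1n ?ltr0n.
have c1 := mono_open_cvg m1 O D mf D0 Dp Dz mO.
have c2 := mono_open_cvg m2 O D mf D0 Dp Dz mO.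
have eqs : (fun n => \int[m1]_a ((n.+1%:R * Num.min (n.+1%:R^-1) (D a))%:E))%E
         = (fun n => \int[m2]_a ((n.+1%:R * Num.min (n.+1%:R^-1) (D a))%:E))%E.
  apply/funext => n.
  under eq_integral do rewrite EFinM.
  under [RHS]eq_integral do rewrite EFinM.
  rewrite ge0_integralZl_EFin//; try (by move=> a _; rewrite lee_fin; case/andP: (f01 n a)); try (apply/measurable_EFinP; exact: (mf n)).
  rewrite ge0_integralZl_EFin//; try (by move=> a _; rewrite lee_fin; case/andP: (f01 n a)); try (apply/measurable_EFinP; exact: (mf n)).
  by rewrite (hf (f n)).
rewrite eqs in c1.
exact: (cvg_unique _ c1 c2).
Qed.

Lemma lip_meas_eq (m1 m2 : {measure set A -> \bar R}) :
  m1 setT = 1%E -> m2 setT = 1%E ->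
  (forall f : A -> R, measurable_fun setT f ->
     (forall a b, `|f a - f b| <= dA a b) -> (forall a, 0 <= f a <= 1) ->
     (\int[m1]_a (f a)%:E = \int[m2]_a (f a)%:E)%E) ->
  forall B, measurable B -> m1 B = m2 B.
Proof.
move=> h1 h2 hf.
apply: (@measure_unique _ _ _ (metric_open dA) (fun=> setT)).
- exact: hbA.
- exact: metric_open_setI.
- by move=> _ x _; exists 1; split => //.
- by rewrite bigcup_const.
- exact: lip_open_eq.
- by move=> _; rewrite h1 ltey.
Qed.

Local Open Scope ereal_scope.

Lemma wass_ub (m1 m2 : {measure set A -> \bar R}) (f : A -> R) :
  measurable_fun setT f -> (forall a b, (`|f a - f b| <= dA a b)%R) ->
  `| \int[m1]_a (f a)%:E - \int[m2]_a (f a)%:E | <= wasserstein dA m1 m2.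
Proof. by move=> mf hf; apply: ereal_sup_ubound; exists f. Qed.

Lemma wass_ge0 (m1 m2 : {measure set A -> \bar R}) :
  0 <= wasserstein dA m1 m2.
Proof.
apply: le_trans (@wass_ub m1 m2 (fun=> 0%R) _ _) => //.
by move=> a b; rewrite subrr normr0 dist_ge0.
Qed.

Lemma int01_fin (m : {measure set A -> \bar R}) (f : A -> R) :
  m setT = 1 -> measurable_fun setT f -> (forall a, (0 <= f a <= 1)%R) ->
  \int[m]_a (f a)%:E \is a fin_num.
Proof.
move=> h1 mf f01.
rewrite ge0_fin_numE; last by apply: integral_ge0 => a _; rewrite lee_fin; case/andP: (f01 a).
apply: (@le_lt_trans _ _ (\int[m]_a (cst 1%E a))).
  apply: ge0_le_integral => //; try (by move=> a _; rewrite lee_fin; case/andP: (f01 a));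
    try (by apply/measurable_EFinP).
by rewrite integral_cst// h1 mule1 ltey.
Qed.

Lemma wass0_eq (m1 m2 : {measure set A -> \bar R}) :
  m1 setT = 1 -> m2 setT = 1 -> wasserstein dA m1 m2 = 0 ->
  forall B, measurable B -> m1 B = m2 B.
Proof.
move=> h1 h2 W0; apply: lip_meas_eq => // f mf hf f01.
have H := @wass_ub m1 m2 f mf hf; rewrite W0 in H.
have fx := @int01_fin m1 f h1 mf f01; have fy := @int01_fin m2 f h2 mf f01.
move: H; rewrite -(fineK fx) -(fineK fy) -EFinB abse_EFin lee_fin.
by rewrite normr_le0 subr_eq0 => /eqP ->.
Qed.

Lemma wass_bound (m1 m2 : {measure set A -> \bar R}) (G : A -> \bar R) (L : \bar R) :
  m1 setT = 1 -> m2 setT = 1 ->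
  m1.-integrable setT G -> m2.-integrable setT G ->
  (forall a, G a \is a fin_num) ->
  (L = +oo \/ exists2 Lr : R, (0 <= Lr)%R & L = Lr%:E /\
      forall a b, `|G a - G b| <= Lr%:E * (dA a b)%:E) ->
  `| \int[m1]_a G a - \int[m2]_a G a | <= wasserstein dA m1 m2 * L.
Proof.
move=> h1 h2 i1 i2 Gfin hL.
have W0 := wass_ge0 m1 m2.
have f1 := integrable_fin_num measurableT i1.
have f2 := integrable_fin_num measurableT i2.
have [WE|Wpos] := eqVneq (wasserstein dA m1 m2) 0.
  have -> : \int[m1]_a G a = \int[m2]_a G a.
    apply: eq_measure_integral => B mB _.
    by rewrite (@wass0_eq m1 m2 h1 h2 WE).
  by rewrite -(fineK f2) -EFinB subrr abse_EFin normr0 WE mul0e.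
have Wgt : 0 < wasserstein dA m1 m2 by rewrite lt0e Wpos W0.
case: hL => [->|[Lr Lr0 [-> hLip]]].
  by rewrite gt0_muley// leey.
have [Lr_eq0|Lr_neq0] := eqVneq Lr 0%R.
  subst Lr.
  have [a0 _] : [set: A] !=set0.
    apply/set0P/eqP => h; move: h1; rewrite h measure0 => -[] /eqP.
    by rewrite eq_sym oner_eq0.
  have HG a : G a = G a0.
    have := hLip a a0; rewrite mul0e -(fineK (Gfin a)) -(fineK (Gfin a0)).
    by rewrite -EFinB abse_EFin lee_fin normr_le0 subr_eq0 => /eqP ->.
  rewrite (eq_integral (fun=> G a0)); last by move=> a _; rewrite HG.
  rewrite [X in _ - X](eq_integral (fun=> G a0)); last by move=> a _; rewrite HG.
  rewrite !integral_cst// h1 h2 mule1 -(fineK (Gfin a0)) -EFinB subrr abse_EFin normr0.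
  by rewrite mule0.
have Lrpos : (0 < Lr)%R by rewrite lt_neqAle eq_sym Lr_neq0 Lr0.
pose g a := (fine (G a) / Lr)%R.
have hg a : (g a)%:E = (Lr^-1)%:E * G a.
  by rewrite /g EFinM muleC fineK.
have mG : measurable_fun setT G by case/integrableP: i1.
have mg : measurable_fun setT g.
  apply/measurable_EFinP.
  rewrite (_ : _ \o _ = (fun a => (Lr^-1)%:E * G a)); last first.
    by apply/funext => a /=; rewrite hg.
  exact: measurable_funeM.
have glip a b : (`|g a - g b| <= dA a b)%R.
  have := hLip a b; rewrite -(fineK (Gfin a)) -(fineK (Gfin b)).
  rewrite -EFinB abse_EFin -EFinM lee_fin => H.
  rewrite /g -mulrBl normrM normfV (gtr0_norm Lrpos).
  by rewrite ler_pdivrMr// mulrC.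
have H := @wass_ub m1 m2 g mg glip.
rewrite (eq_integral (fun a => (Lr^-1)%:E * G a)) in H; last by move=> a _; rewrite hg.
rewrite [X in _ - X](eq_integral (fun a => (Lr^-1)%:E * G a)) in H; last by move=> a _; rewrite hg.
rewrite !integralZl// in H.
move: H; rewrite -(fineK f1) -(fineK f2) -!EFinM -EFinB abse_EFin.
move: Wgt W0; case: (wasserstein dA m1 m2) => [w| |] //= Wgt W0.
  rewrite !lee_fin -mulrBr normrM (gtr0_norm (_ : 0 < Lr^-1)%R) ?invr_gt0// => H.
  have := ler_wpM2l (ltW Lrpos) H.
  by rewrite mulrA divff ?lt0r_neq0// mul1r mulrC.
by move=> _; rewrite gt0_mulye ?lte_fin// leey.
Qed.

End lip.

Local Open Scope ereal_scope.
Lemma lipnorm_cases (R : realType) (S A : Type) (dS : S -> S -> R) (dA : A -> A -> R)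
  (F : S -> A -> \bar R) (s : S) :
  dS s s = 0%R -> (forall a b, (0 <= dA a b)%R) ->
  (forall a, F s a \is a fin_num) ->
  lip_norm2 dS dA F = +oo \/ exists2 Lr : R, (0 <= Lr)%R &
     lip_norm2 dS dA F = Lr%:E /\
     forall a b, `|F s a - F s b| <= Lr%:E * (dA a b)%:E.
Proof.
move=> dss dA0 Ffin.
set Lset := [set L : R | (0 <= L)%R /\ forall s a s0 a0,
   `|F s a - F s0 a0| <= L%:E * (dS s s0 + dA a a0)%:E].
have -> : lip_norm2 dS dA F = ereal_inf [set L%:E | L in Lset] by [].
case: (pselect (exists L, Lset L)); last first.
  move=> nL; left.
  have -> : [set L%:E | L in Lset] = set0.
    by apply/seteqP; split => // x [L LL _]; apply: nL; exists L.
  exact: ereal_inf0.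
move=> [L0 [L00 hL0]]; right.
set I := ereal_inf _.
have I0 : 0 <= I by apply/ereal_infP => _ [L [L0' _] <-]; rewrite lee_fin.
have IL0 : I <= L0%:E by apply: ereal_inf_lbound; exists L0.
have Ifin : I \is a fin_num by rewrite ge0_fin_numE// (le_lt_trans IL0)// ltey.
exists (fine I); first by rewrite -lee_fin fineK.
split; first by rewrite fineK.
move=> a b.
have dfin : `|F s a - F s b| \is a fin_num.
  by rewrite -(fineK (Ffin a)) -(fineK (Ffin b)) -EFinB abse_EFin.
have hall L : Lset L -> `|F s a - F s b| <= L%:E * (dA a b)%:E.
  by move=> [_ hL]; have := hL s a s b; rewrite dss add0r.
rewrite -(fineK dfin) -EFinM lee_fin.
have [dz|dpos] := eqVneq (dA a b) 0%R.
  have := hall L0 (conj L00 hL0); rewrite dz mule0 -(fineK dfin) lee_fin => H.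
  by rewrite mulr0 in H *.
have dp : (0 < dA a b)%R by rewrite lt_neqAle eq_sym dpos dA0.
rewrite -ler_pdivrMr//.
rewrite -lee_fin fineK//; apply/ereal_infP => _ [L LL <-].
have := hall L LL; rewrite -(fineK dfin) -EFinM !lee_fin => H.
by rewrite ler_pdivrMr.
Qed.

Section occ.
Context (R : realType) (d1 d2 : measure_display) (S : measurableType d1) (A : measurableType d2)
  (pi : R.-pker S ~> A) (p : R.-pker (S * A)%type ~> S).

Lemma mk B : measurable B -> measurable_fun setT (fun s => kcomp pi p s B).
Proof. move=> mB; exact: (measurable_kernel (pi \; p)). Qed.

Lemma ps s : pi s setT = 1. Proof. exact: prob_kernel. Qed.
End occ.

Section occ2.
Context (R : realType) (d1 d2 : measure_display) (S : measurableType d1) (A : measurableType d2)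
  (pi : R.-pker S ~> A) (p : R.-pker (S * A)%type ~> S).

Definition mstep (m : {measure set S -> \bar R}) : set S -> \bar R :=
  fun B => \int[m]_s kcomp pi p s B.

Section mstep_measure.
Variable m : {measure set S -> \bar R}.

Let mstep0 : mstep m set0 = 0.
Proof.
by rewrite /mstep (eq_integral (cst 0)) ?integral0// => s _; rewrite measure0.
Qed.

Let mstep_ge0 B : 0 <= mstep m B.
Proof. by apply: integral_ge0 => s _; exact: measure_ge0. Qed.

Let mstep_sigma_additive : semi_sigma_additive (mstep m).
Proof.
move=> U mU tU mUU; rewrite [X in _ --> X](_ : _ =
  \int[m]_s (\sum_(n <oo) kcomp pi p s (U n))); last first.
  apply: eq_integral => s _.
  by apply/esym/cvg_lim => //; exact/measure_semi_sigma_additive.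
apply/cvg_closeP; split.
  by apply: is_cvg_nneseries => n _ _; exact: integral_ge0.
rewrite closeE// integral_nneseries// => n.
exact: (measurable_kernel (pi \; p)).
Qed.

HB.instance Definition _ := isMeasure.Build _ _ R
  (mstep m) mstep0 mstep_ge0 mstep_sigma_additive.
End mstep_measure.

Variable rho : probability S R.

Fixpoint msd (t : nat) : {measure set S -> \bar R} :=
  match t with
  | O => rho
  | t'.+1 => mstep (msd t')
  end.

Lemma state_distE t : state_dist rho pi p t = msd t.
Proof.
elim: t => [//|t IH] /=; apply/funext => B.
by rewrite IH.
Qed.

Variable gamma : R.
Hypothesis hg : (0 <= gamma < 1)%R.

Definition occ_meas : {measure set S -> \bar R} :=
  mscale (@NngNum _ (1 - gamma)%R ltac:(case/andP: hg => _ h; rewrite subr_ge0 ltW//))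
   (mseries (fun t => mscale (@NngNum _ (gamma ^+ t)%R ltac:(case/andP: hg => h _; exact: exprn_ge0)) (msd t)) 0).

Lemma occupancyE : occupancy gamma rho pi p = occ_meas.
Proof.
apply/funext => B; rewrite /occupancy /= /mscale /mseries /=.
congr (_ * _); apply: eq_eseriesr => t _.
by rewrite state_distE.
Qed.
End occ2.

Lemma le_ge0_int d (T : measurableType d) (R : realType) (mu : {measure set T -> \bar R})
  (f g : T -> \bar R) : (forall x, 0 <= f x) -> (forall x, f x <= g x) ->
  \int[mu]_x f x <= \int[mu]_x g x.
Proof using All.
move=> f0 fg.
rewrite !ge0_integralTE//; last by move=> x; exact: le_trans (f0 x) (fg x).
apply: le_ereal_sup => _ [h hf <-]; exists h => //= x.
exact: le_trans (hf x) (fg x).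
Qed.

Lemma cst_int d (T : measurableType d) (R : realType) (mu : {measure set T -> \bar R})
  (c : \bar R) : mu setT = 1 -> c \is a fin_num -> mu.-integrable setT (cst c).
Proof using All.
move=> h1 cf; apply/integrableP; split => //.
rewrite (_ : (fun x => `|cst c x|) = cst `|c|)// integral_cst// h1 mule1 -(fineK cf) abse_EFin ltey//.
Qed.

Section pw.
Context (R : realType) (d1 d2 : measure_display) (S : measurableType d1) (A : measurableType d2).
Variables (m m' : {measure set A -> \bar R}) (kp : A -> {measure set S -> \bar R}).
Hypotheses (h1 : m setT = 1) (h1' : m' setT = 1) (hk : forall a, kp a setT = 1).
Variables (u : A -> S -> R) (q : A -> \bar R) (v : R).
Hypothesis iu : forall a, (kp a).-integrable setT (fun s' => (u a s')%:E).
Hypothesis qfin : forall a, q a \is a fin_num.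
Hypotheses (iq : m.-integrable setT q) (iq' : m'.-integrable setT q).
Let P a := \int[kp a]_s' (u a s')%:E.
Hypotheses (iP : m.-integrable setT P) (iP' : m'.-integrable setT P).
Let G a := \int[kp a]_s' ((u a s')%:E - q a).

Lemma GE a : G a = P a - q a.
Proof using All.
rewrite /G /P (_ : (fun s' => _) = (fun s' => (u a s')%:E) \- cst (q a)) //.
rewrite integralB//; last exact: cst_int.
by rewrite integral_cst// hk mule1.
Qed.

Lemma Pfin a : P a \is a fin_num.
Proof. exact: integrable_fin_num. Qed.

Lemma Gfin a : G a \is a fin_num.
Proof. by rewrite GE fin_numB Pfin qfin. Qed.

Lemma iG : m.-integrable setT G.
Proof using All.
rewrite (_ : G = P \- q); first exact: integrableB.
by apply/funext => a; rewrite GE.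
Qed.

Lemma iG' : m'.-integrable setT G.
Proof using All.
rewrite (_ : G = P \- q); first exact: integrableB.
by apply/funext => a; rewrite GE.
Qed.

Lemma pw_identity :
  \int[m']_a \int[kp a]_s' (u a s' - v)%:E
  - (\int[m]_a G a + \int[m']_a (q a - v%:E))
  = \int[m']_a G a - \int[m]_a G a.
Proof using All.
have vfin : v%:E \is a fin_num by [].
have E1 : \int[m']_a \int[kp a]_s' (u a s' - v)%:E = \int[m']_a P a - v%:E.
  rewrite (eq_integral (P \- cst v%:E)); last first.
    move=> a _; rewrite /P /=.
    rewrite (_ : (fun s' => _) = (fun s' => (u a s')%:E) \- cst v%:E); last first.
      by apply/funext => s'; rewrite /= EFinB.
    rewrite integralB//; last exact: cst_int.
    by rewrite integral_cst// hk mule1.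
  rewrite integralB//; last exact: cst_int.
  by rewrite integral_cst// h1' mule1.
have E2 : \int[m]_a G a = \int[m]_a P a - \int[m]_a q a.
  rewrite (eq_integral (P \- q)); last by move=> a _; rewrite GE.
  by rewrite integralB.
have E3 : \int[m']_a G a = \int[m']_a P a - \int[m']_a q a.
  rewrite (eq_integral (P \- q)); last by move=> a _; rewrite GE.
  by rewrite integralB.
have E4 : \int[m']_a (q a - v%:E) = \int[m']_a q a - v%:E.
  rewrite (_ : (fun a => _) = q \- cst v%:E) //.
  rewrite integralB//; last exact: cst_int.
  by rewrite integral_cst// h1' mule1.
rewrite E1 E2 E3 E4.
have := integrable_fin_num measurableT iP; have := integrable_fin_num measurableT iP'.
have := integrable_fin_num measurableT iq; have := integrable_fin_num measurableT iq'.
move=> fq' fq fP' fP.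
rewrite -(fineK fq') -(fineK fq) -(fineK fP') -(fineK fP).
rewrite -!EFinB; congr EFin; ring.
Qed.
End pw.

Local Close Scope ereal_scope.
Theorem lemma4 (R : realType) (d1 d2 : measure_display)
    (S : measurableType d1) (A : measurableType d2)
    (dS : S -> S -> R) (dA : A -> A -> R)
    (hdS : is_metric dS) (hdA : is_metric dA)
    (hbS : borel_for dS) (hbA : borel_for dA)
    (gamma : R) (hgamma : 0 <= gamma < 1)
    (rho : probability S R) (r : S -> A -> S -> R)
    (pi pi' : R.-pker S ~> A) (p p' : R.-pker (S * A)%type ~> S)
    (V : S -> R) :
  let U := Ufun gamma r V in
  let Q := Qfun p U in
  let mu := occupancy gamma rho pi p in
  (* V = V_{pi,p}: the (well defined) value function, i.e. Bellman equation *)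
  (forall s, (V s)%:E = (\int[pi s]_a Q s a)%E) ->
  (* well-definedness of the integrals involved *)
  (forall s a, (p (s, a)).-integrable [set: S] (fun s' => (U s a s')%:E)) ->
  (forall s a, (p' (s, a)).-integrable [set: S] (fun s' => (U s a s')%:E)) ->
  (forall s, (pi s).-integrable [set: A] (Q s)) ->
  (forall s, (pi' s).-integrable [set: A] (Q s)) ->
  (forall s, (pi s).-integrable [set: A]
                (fun a => (\int[p' (s, a)]_s' (U s a s')%:E)%E)) ->
  (forall s, (pi' s).-integrable [set: A]
                (fun a => (\int[p' (s, a)]_s' (U s a s')%:E)%E)) ->
  mu.-integrable [set: S] (adv_both pi' p' U V) ->
  mu.-integrable [set: S] (fun s => (\int[pi s]_a adv_conf p' U Q s a)%E) ->
  mu.-integrable [set: S] (adv_pol pi' Q V) ->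
  (`| \int[mu]_s adv_both pi' p' U V s
      - (\int[mu]_s \int[pi s]_a adv_conf p' U Q s a
         + \int[mu]_s adv_pol pi' Q V s) |
   <= \int[mu]_s (wasserstein dA (pi' s) (pi s) * lip_norm2 dS dA (adv_conf p' U Q)))%E.
Proof.
move=> U Q mu HV HpU Hp'U HpiQ Hpi'Q HpiP Hpi'P I1 I2 I3.
pose M := @occ_meas R d1 d2 S A pi p rho gamma hgamma.
have muE : mu = M by exact: occupancyE.
rewrite muE in I1 I2 I3 *.
have hpi s : pi s setT = 1%E by apply: prob_kernel.
have hpi' s : pi' s setT = 1%E by apply: prob_kernel.
have hp' x : p' x setT = 1%E by apply: prob_kernel.
have Qfin s a : Q s a \is a fin_num by exact: integrable_fin_num (HpU s a).
rewrite -integralD// -integralB//; last exact: integrableD.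
apply: le_trans (le_abse_integral _ _ _) _ => //.
  have Hi : M.-integrable setT (fun s => adv_both pi' p' U V s -
     ((\int[pi s]_a adv_conf p' U Q s a)%E + adv_pol pi' Q V s))%E.
    by apply: integrableB => //; exact: integrableD.
  exact: (measurable_int M Hi).
apply: le_ge0_int => s; first exact: abse_ge0.
have Hid := @pw_identity R d1 d2 S A (pi s) (pi' s) (fun a => p' (s, a))
  (hpi s) (hpi' s) (fun a => hp' (s, a)) (fun a s' => U s a s') (Q s) (V s)
  (Hp'U s) (Qfin s) (HpiQ s) (Hpi'Q s) (HpiP s) (Hpi'P s).
rewrite /=.
rewrite [X in `|X|%E](_ : _ = \int[pi' s]_a adv_conf p' U Q s a - \int[pi s]_a adv_conf p' U Q s a)%E; last exact: Hid.
apply: wass_bound => //.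
- exact: (@iG' R d1 d2 S A (pi s) (pi' s) (fun a => p' (s, a))
  (hpi s) (hpi' s) (fun a => hp' (s, a)) (fun a s' => U s a s') (Q s) (V s)
  (Hp'U s) (Qfin s) (HpiQ s) (Hpi'Q s) (HpiP s) (Hpi'P s)).
- exact: (@iG R d1 d2 S A (pi s) (pi' s) (fun a => p' (s, a))
  (hpi s) (hpi' s) (fun a => hp' (s, a)) (fun a s' => U s a s') (Q s) (V s)
  (Hp'U s) (Qfin s) (HpiQ s) (Hpi'Q s) (HpiP s) (Hpi'P s)).
- move=> a; exact: (@Gfin R d1 d2 S A (pi s) (pi' s) (fun a => p' (s, a))
  (hpi s) (hpi' s) (fun a => hp' (s, a)) (fun a s' => U s a s') (Q s) (V s)
  (Hp'U s) (Qfin s) (HpiQ s) (Hpi'Q s) (HpiP s) (Hpi'P s)).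
- apply: lipnorm_cases.
  + by case: hdS => h0 _ _; apply/h0.
  + exact: dist_ge0.
  + move=> a; exact: (@Gfin R d1 d2 S A (pi s) (pi' s) (fun a => p' (s, a))
    (hpi s) (hpi' s) (fun a => hp' (s, a)) (fun a s' => U s a s') (Q s) (V s)
    (Hp'U s) (Qfin s) (HpiQ s) (Hpi'Q s) (HpiP s) (Hpi'P s)).
Qed.
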